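(* Let $G=(V,E)$ be a directed graph without parallel edges, with integer edge capacities in $\{1,\dots,U\}$ and root $r\in V$, and let $\lambda$ be the capacity of a minimum $r$-cut. Let $k$ be the minimum number of vertices in a sink component of a minimum $r$-cut. Then either $k=1$ or $\lambda< Uk$.
   Context: For a nonempty set $T\subseteq V\setminus\{r\}$, the $r$-cut with sink component $T$ is the set of edges with head in $T$ and tail outside $T$; its capacity is the total capacity of these edges. A minimum $r$-cut is an $r$-cut of minimum capacity. *)

(* Defs.v *)
From mathcomp Require Import all_boot.
Set Implicit Arguments. Unset Strict Implicit. Unset Printing Implicit Defensive.

(* A directed graph without parallel edges on a finite vertex set V is an
   edge relation [E : rel V] (at most one edge u -> v for each ordered pair).
   Capacities are a function [c : V -> V -> nat], relevant only on edges. *)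

Definition rcut_sink (V : finType) (r : V) (T : {set V}) : bool :=
  (T != set0) && (r \notin T).

Definition cut_cap (V : finType) (E : rel V) (c : V -> V -> nat)
    (T : {set V}) : nat :=
  \sum_(u in ~: T) \sum_(v in T | E u v) c u v.

Definition min_rcut (V : finType) (E : rel V) (c : V -> V -> nat) (r : V)
    (T : {set V}) : Prop :=
  rcut_sink r T /\
  forall T' : {set V}, rcut_sink r T' -> cut_cap E c T <= cut_cap E c T'.

(* Main.v *)
Require Import Defs.
From mathcomp Require Import all_boot.
From mathcomp Require Import zify.

Theorem lemma2p2 (V : finType) (E : rel V) (c : V -> V -> nat) (U : nat)
    (r : V)
    (hcap : forall u v, E u v -> 1 <= c u v <= U)
    (T : {set V})
    (hTmin : min_rcut E c r T)
    (hTsmall : forall T' : {set V}, min_rcut E c r T' -> #|T| <= #|T'|) :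
  #|T| = 1 \/ cut_cap E c T < U * #|T|.
Proof.
case: hTmin => [/andP [hT0 hrT] hmin].
case: (eqVneq #|T| 1) => [->|hk1]; [by left | right].
have hk0 : 0 < #|T| by rewrite card_gt0.
set lam := cut_cap E c T.
set F := fun u v => if E u v then c u v else 0.
have cap1 v : cut_cap E c [set v] = \sum_(u | u != v) F u v.
  rewrite /cut_cap; apply: eq_big => [u|u _]; first by rewrite !inE.
  by rewrite big_mkcondr big_set1.
have hlam : lam = \sum_(v in T) \sum_(u | u \notin T) F u v.
  rewrite /lam /cut_cap (eq_bigr (fun u => \sum_(v in T) F u v)); last first.
    by move=> u _; rewrite big_mkcondr.
  rewrite exchange_big /=.
  by apply: eq_bigr => v _; apply: eq_bigl => u; rewrite inE.
have up : \sum_(v in T) cut_cap E c [set v] <= lam + #|T| * ((#|T| - 1) * U).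
  rewrite hlam -sum_nat_const -big_split /=.
  apply: leq_sum => v vT; rewrite cap1 (bigID (mem T)) /= addnC leq_add //.
    rewrite leq_eqVlt; apply/orP; left; apply/eqP; apply: eq_bigl => u.
    by case: (u =P v) => [->|]; rewrite ?vT ?andbT.
  apply: (@leq_trans (\sum_(u | (u != v) && (u \in T)) U)).
    apply: leq_sum => u /andP [] _ _; rewrite /F; case: (boolP (E u v)) => // huv.
    by case/andP: (hcap _ _ huv).
  rewrite sum_nat_const; apply: leq_mul => //.
  have -> : #|T| - 1 = #|T :\ v| by rewrite (cardsD1 v T) vT add1n subn1.
  apply: subset_leq_card; apply/subsetP => u; rewrite !inE.
  by rewrite /in_mem /=.
have low : \sum_(v in T) cut_cap E c [set v] >= #|T| * lam.+1.
  rewrite -sum_nat_const; apply: leq_sum => v vT.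
  have sv : rcut_sink r [set v].
    rewrite /rcut_sink; apply/andP; split; first by apply/set0Pn; exists v; rewrite inE.
    by rewrite inE; apply/eqP => rv; move: hrT; rewrite rv vT.
  rewrite ltnNge; apply/negP => hle.
  have mv : min_rcut E c r [set v].
    split => // T' sT'; apply: leq_trans hle (hmin _ sT').
  move: (hTsmall _ mv); rewrite cards1 => hk.
  by move: hk1 hk0 hk; clear; lia.
rewrite ltnNge; apply/negP => hge.
have := leq_trans low up.
by move: hk1 hk0 hge; clear; nia.
Qed.
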